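(* Consider an instance with $n$ agents, $m$ items and binary additive valuations (notation as in the context). For every stable fractional allocation $x$ (items divisible) with profile $(h_1,\dots,h_n)$: (1) $h_i=d$ for each integer $d\ge0$ and each $i\in\mathsf{layer}_d$; (2) $h_i\in[d-1,d]$ for each integer $d\ge1$ and each $i\in\mathsf{layer}^-_d$.
   Context: Agents $[n]$, items $[m]$; each agent $i$ has a set $L_i\subseteq[m]$ of liked items. Indivisible setting: an allocation $\chi=(\chi_1,\dots,\chi_n)$ is a tuple of pairwise disjoint subsets of $[m]$, clean if $\chi_i\subseteq L_i$, max-USW if it maximizes $\sum_i|\chi_i\cap L_i|$; allocations are clean and max-USW. Arc $(i,i')$, $i\ne i'$, if some $o\in\chi_i$ lies in $L_{i'}$; a transfer $u\to v$ is a simple directed path from $u$ to $v$ with at least one arc; narrowing if $|\chi_u|\ge|\chi_v|+2$; stable if no narrowing transfer. For integer $d\ge0$, $\mathsf{layer}_d$ is the set of agents $i$ with $|\chi_i|=d$ in every stable indivisible allocation $\chi$; for integer $d\ge1$, $\mathsf{layer}^-_d$ is the set of agents $i$ with $\{|\chi_i|:\chi\text{ stable indivisible}\}=\{d-1,d\}$. Divisible setting: a fractional allocation is $x=(x_{o,i})$ with $x_{o,i}\ge0$, $\sum_i x_{o,i}\le1$; clean if $x_{o,i}=0$ for $o\notin L_i$; max-USW if it maximizes $\sum_i\sum_{o\in L_i}x_{o,i}$; allocations are clean and max-USW; profile $h_i=\sum_o x_{o,i}$. A transfer $u\to v$: distinct agents $u=i_1,\dots,i_k=v$ ($k\ge2$),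 items $o_l$ with $x_{o_l,i_l}>0$, $o_l\in L_{i_{l+1}}$, amount $0<\Delta\le\min_l x_{o_l,i_l}$, moving $\Delta$ of $o_l$ from $i_l$ to $i_{l+1}$; narrowing if $h_u-\Delta\ge h_v+\Delta$; stable if no narrowing transfer. *)

(* Defs.v *)
(* Agents are 'I_n, items are 'I_m, L i = liked items of agent i. *)
From HB Require Import structures.
From mathcomp Require Import all_boot all_order all_algebra.
Set Implicit Arguments. Unset Strict Implicit. Unset Printing Implicit Defensive.
Import Order.TTheory GRing.Theory Num.Theory.

Section Indivisible.
Variables (n m : nat) (L : 'I_n -> {set 'I_m}).

Definition indiv_alloc (chi : 'I_n -> {set 'I_m}) : Prop :=
  forall i j : 'I_n, i != j -> [disjoint chi i & chi j].

Definition indiv_clean (chi : 'I_n -> {set 'I_m}) : Prop :=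
  forall i, chi i \subset L i.

Definition indiv_usw (chi : 'I_n -> {set 'I_m}) : nat :=
  \sum_(i < n) #|chi i :&: L i|.

Definition indiv_maxusw (chi : 'I_n -> {set 'I_m}) : Prop :=
  indiv_alloc chi /\
  forall chi' : 'I_n -> {set 'I_m}, indiv_alloc chi' -> indiv_usw chi' <= indiv_usw chi.

Definition arc (chi : 'I_n -> {set 'I_m}) (i i' : 'I_n) : bool :=
  (i != i') && [exists o, (o \in chi i) && (o \in L i')].

Definition indiv_transfer (chi : 'I_n -> {set 'I_m}) (u v : 'I_n) : Prop :=
  exists s : seq 'I_n,
    [/\ s != [::], path (arc chi) u s, uniq (u :: s) & last u s = v].

Definition indiv_stable (chi : 'I_n -> {set 'I_m}) : Prop :=
  forall u v : 'I_n, indiv_transfer chi u v -> ~ (#|chi v| + 2 <= #|chi u|).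

Definition stable_indiv (chi : 'I_n -> {set 'I_m}) : Prop :=
  [/\ indiv_clean chi, indiv_maxusw chi & indiv_stable chi].

Definition in_layer (d : nat) (i : 'I_n) : Prop :=
  forall chi, stable_indiv chi -> #|chi i| = d.

Definition in_layer_minus (d : nat) (i : 'I_n) : Prop :=
  [/\ forall chi, stable_indiv chi -> #|chi i| = d.-1 \/ #|chi i| = d,
      exists2 chi, stable_indiv chi & #|chi i| = d.-1
    & exists2 chi, stable_indiv chi & #|chi i| = d].

End Indivisible.

Local Open Scope ring_scope.

Section Divisible.
Variables (R : realFieldType) (n m : nat) (L : 'I_n -> {set 'I_m}).

(* x o i = fraction of item o given to agent i *)
Definition frac_alloc (x : 'I_m -> 'I_n -> R) : Prop :=
  (forall o i, 0 <= x o i) /\ (forall o, \sum_(i < n) x o i <= 1).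

Definition frac_clean (x : 'I_m -> 'I_n -> R) : Prop :=
  forall o i, o \notin L i -> x o i = 0.

Definition frac_usw (x : 'I_m -> 'I_n -> R) : R :=
  \sum_(i < n) \sum_(o in L i) x o i.

Definition frac_maxusw (x : 'I_m -> 'I_n -> R) : Prop :=
  frac_alloc x /\
  forall x' : 'I_m -> 'I_n -> R, frac_alloc x' -> frac_usw x' <= frac_usw x.

Definition profile (x : 'I_m -> 'I_n -> R) (i : 'I_n) : R :=
  \sum_(o < m) x o i.

(* transfer u -> v: agents u = i_1, ..., i_k = v distinct (k >= 2), written
   as u :: s; items os = o_1, ..., o_{k-1}; step l moves delta of o_l from
   i_l to i_{l+1}. *)
Definition frac_steps (u : 'I_n) (s : seq 'I_n) (os : seq 'I_m) :=
  zip (zip (u :: s) s) os.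

Definition frac_transfer (x : 'I_m -> 'I_n -> R) (u v : 'I_n)
    (s : seq 'I_n) (os : seq 'I_m) (delta : R) : Prop :=
  [/\ s != [::], uniq (u :: s), last u s = v & size os = size s] /\
  [/\ (forall t, t \in frac_steps u s os ->
          0 < x t.2 t.1.1 /\ t.2 \in L t.1.2),
      0 < delta
    & forall t, t \in frac_steps u s os -> delta <= x t.2 t.1.1].

Definition frac_narrowing (x : 'I_m -> 'I_n -> R) (u v : 'I_n) (delta : R) : Prop :=
  profile x u - delta >= profile x v + delta.

Definition frac_stable (x : 'I_m -> 'I_n -> R) : Prop :=
  forall u v s os delta, frac_transfer x u v s os delta ->
    ~ frac_narrowing x u v delta.

Definition stable_frac (x : 'I_m -> 'I_n -> R) : Prop :=
  [/\ frac_clean x, frac_maxusw x & frac_stable x].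

End Divisible.

(* Main.v *)
Require Import Defs.
From HB Require Import structures.
From mathcomp Require Import all_boot all_order all_algebra.
From mathcomp Require Import ring lra.
Import Order.TTheory GRing.Theory Num.Theory.
Local Open Scope ring_scope.

Section Proofs.
Variables (R : realFieldType) (n m : nat) (L : 'I_n -> {set 'I_m})
    (x : 'I_m -> 'I_n -> R).
Hypothesis Hx : stable_frac L x.

Local Notation h := (profile x).

Lemma x_ge0 o i : 0 <= x o i.
Proof. by case: Hx => _ [[H _] _] _. Qed.

Lemma x_clean o i : o \notin L i -> x o i = 0.
Proof. by case: Hx => H _ _; apply: H. Qed.

Definition likable (o : 'I_m) : bool := [exists v, o \in L v].

Lemma x_full o : likable o -> \sum_i x o i = 1.
Proof.
move=> /existsP[v ov].
case: Hx => _ [[H0 H1] Hmax] _.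
have := H1 o; rewrite le_eqVlt => /orP[/eqP //|lt1].
exfalso.
set s := \sum_i x o i in lt1.
pose x' := fun o' i' => x o' i' + (if (o' == o) && (i' == v) then 1 - s else 0).
have Ha : frac_alloc x'.
  split=> [o' i'|o'].
    rewrite /x'; case: ifP => _; last by rewrite addr0 H0.
    by apply: addr_ge0 => //; rewrite subr_ge0 ltW.
  rewrite /x' big_split /=.
  case: (eqVneq o' o) => [->|neo] /=.
    by rewrite -big_mkcond big_pred1_eq -/s addrC subrK.
  by rewrite [X in _ + X]big1 ?addr0 ?H1 // => i _; rewrite (negbTE neo).
have := Hmax _ Ha.
rewrite /frac_usw /x'.
under eq_bigr do rewrite big_split /=.
rewrite big_split /=.
rewrite [X in _ + X <= _](bigD1 v) //= [X in _ + (_ + X) <= _]big1 /=; last first.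
  move=> j nj; apply: big1 => o' _; by rewrite (negbTE nj) andbF.
rewrite [X in _ + (X + _) <= _](bigD1 o) //= !eqxx [X in _ + (_ + X + _) <= _]big1 /=; last first.
  by move=> o' /andP[_ /negbTE ->].
rewrite !addr0 => H; have : 1 - s <= 0 by lra.
by rewrite subr_le0 leNgt lt1.
Qed.

Lemma x_good {o u} : 0 < x o u ->
  (o \in L u) /\ (forall v, o \in L v -> h u <= h v).
Proof.
move=> xpos.
have ou : o \in L u.
  apply/negPn/negP => /x_clean H; by rewrite H ltxx in xpos.
split=> // v ov.
case: (eqVneq v u) => [->//|nvu].
rewrite leNgt; apply/negP => hlt.
case: Hx => _ _ Hst.
pose d := Order.min (x o u) ((h u - h v) / 2).
have dpos : 0 < d by rewrite lt_min xpos divr_gt0 // subr_gt0.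
apply: (Hst u v [:: v] [:: o] d).
  split; first split => //=.
  - by rewrite inE eq_sym nvu.
  split => //.
    by move=> t; rewrite /frac_steps /= inE => /eqP -> /=.
  by move=> t; rewrite /frac_steps /= inE => /eqP -> /=; rewrite ge_min lexx.
rewrite /frac_narrowing.
have : d <= (h u - h v) / 2 by rewrite ge_min lexx orbT.
lra.
Qed.


Definition good (o : 'I_m) (y : 'I_n) : bool :=
  (o \in L y) && [forall v, (o \in L v) ==> (h y <= h v)].

Lemma x_pos_good {o u} : 0 < x o u -> good o u.
Proof.
move=> /x_good[ou H]; rewrite /good ou; apply/forallP => v; apply/implyP => ov.
exact: H.
Qed.

Lemma good_likable {o y} : good o y -> likable o.
Proof. by case/andP => oy _; apply/existsP; exists y. Qed.

Definition valid (f : {ffun 'I_m -> 'I_n}) : bool :=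
  [forall o, likable o ==> good o (f o)].

Lemma valid_good {f o} : valid f -> likable o -> good o (f o).
Proof. by move=> /forallP /(_ o) /implyP. Qed.

Definition chi (f : {ffun 'I_m -> 'I_n}) (y : 'I_n) : {set 'I_m} :=
  [set o | (f o == y) && (o \in L y)].

Definition a f y : R := (#|chi f y|)%:R.

Definition larc (f : {ffun 'I_m -> 'I_n}) : rel 'I_n :=
  fun y y' => (y != y') && [exists o, (f o == y) && good o y'].

Lemma a_sum f y : a f y = \sum_o ((f o == y) && (o \in L y))%:R.
Proof.
rewrite /a -sum1_card natr_sum big_mkcond /=; apply: eq_bigr => o _.
by rewrite inE; case: (_ && _).
Qed.

Lemma sum_ind (P : pred 'I_n) (f : {ffun 'I_m -> 'I_n}) o :
  \sum_(s | P s) ((f o == s) && (o \in L s))%:R = ((P (f o)) && (o \in L (f o)))%:R :> R.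
Proof.
case: (boolP (P (f o))) => Pf /=.
  rewrite (bigD1 (f o)) //= eqxx big1 ?addr0 // => s /andP[_ ns].
  by rewrite eq_sym (negbTE ns).
apply: big1 => s Ps; case: (eqVneq (f o) s) => // e; subst.
by rewrite Ps in Pf.
Qed.

Lemma sum_subset (P : pred 'I_n) (F : 'I_n -> R) :
  (forall i, 0 <= F i) -> \sum_(i | P i) F i <= \sum_i F i.
Proof.
move=> H; rewrite [X in _ <= X](bigID P) /= lerDl; exact: sumr_ge0.
Qed.

Lemma reach_fwd {f} j : valid f ->
  \sum_(s | connect (larc f) j s) a f s <= \sum_(s | connect (larc f) j s) h s.
Proof.
move=> vf.
under eq_bigr do rewrite a_sum.
rewrite /profile exchange_big [X in _ <= X]exchange_big /=.
apply: ler_sum => o _; rewrite sum_ind.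
case: (boolP (connect (larc f) j (f o) && (o \in L (f o)))) => [/andP[Sf oL]|_];
  last by apply: sumr_ge0 => s _; exact: x_ge0.
have lo : likable o by apply/existsP; exists (f o).
rewrite -(x_full o lo) [X in X <= _](bigID (connect (larc f) j)) /=.
rewrite [X in _ + X <= _]big1 ?addr0 //.
move=> s Ss; apply/eqP; rewrite eq_le x_ge0 andbT leNgt; apply/negP => xs.
have gs := x_pos_good xs.
case: (eqVneq (f o) s) => [e|ne]; first by rewrite -e Sf in Ss.
move/negP: Ss; apply; apply: connect_trans Sf (connect1 _).
rewrite /larc ne /=; apply/existsP; exists o; by rewrite eqxx gs.
Qed.

Lemma reach_bwd {f} j : valid f ->
  \sum_(s | connect (larc f) s j) h s <= \sum_(s | connect (larc f) s j) a f s.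
Proof.
move=> vf.
under [X in _ <= X]eq_bigr do rewrite a_sum.
rewrite /profile exchange_big [X in _ <= X]exchange_big /=.
apply: ler_sum => o _; rewrite sum_ind.
case: (boolP [exists s, connect (larc f) s j && (0 < x o s)]).
  move=> /existsP[s /andP[Ts xs]].
  have gs := x_pos_good xs.
  have lo := good_likable gs.
  have gf := valid_good vf lo.
  have Tf : connect (larc f) (f o) j.
    case: (eqVneq (f o) s) => [->//|ne].
    apply: connect_trans (connect1 _) Ts.
    rewrite /larc ne /=; apply/existsP; exists o; by rewrite eqxx gs.
  rewrite Tf (andP gf).1 /= -(x_full o lo).
  apply: sum_subset => i; exact: x_ge0.
move=> /existsPn H.
rewrite big1 ?ler0n // => s Ts.
have := H s; rewrite Ts /= => /negP xs.
apply/eqP; rewrite eq_le x_ge0 andbT leNgt; exact/negP.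
Qed.


Lemma simple_path f j k : connect (larc f) j k ->
  exists s, [/\ path (larc f) j s, uniq (j :: s) & last j s = k].
Proof.
move=> /connectP[p pth ->]; case: (shortenP pth) => p' pth' u _.
by exists p'.
Qed.

Lemma shift_path {f j s} : valid f -> path (larc f) j s -> uniq (j :: s) ->
  exists2 f', valid f' &
    forall y, a f' y + (y == j)%:R = a f y + (y == last j s)%:R.
Proof.
elim: s f j => [|w s IH] f j vf /=.
  by move=> _ _; exists f.
move=> /andP[ajw pth] /andP[jn u].
case/andP: ajw => njw /existsP[o /andP[/eqP fo gw]].
pose f1 := [ffun o' => if o' == o then w else f o'].
have vf1 : valid f1.
  apply/forallP => o'; apply/implyP => lo'; rewrite ffunE.
  case: (eqVneq o' o) => [->//|_]; exact: valid_good vf lo'.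
have oj : o \in L j by rewrite -fo; case/andP: (valid_good vf (good_likable gw)).
have ow : o \in L w by case/andP: gw.
have a1 : forall y, a f1 y + (y == j)%:R = a f y + (y == w)%:R.
  move=> y; rewrite !a_sum (bigD1 o) //= [X in _ = X + _](bigD1 o) //= ffunE eqxx fo.
  have -> : \sum_(i | i != o) ((f1 i == y) && (i \in L y))%:R =
            \sum_(i | i != o) ((f i == y) && (i \in L y))%:R :> R.
    by apply: eq_bigr => o' no; rewrite ffunE (negbTE no).
  rewrite [w == y]eq_sym [j == y]eq_sym.
  case: (eqVneq y w) => [e|nyw]; case: (eqVneq y j) => [e'|nyj] //=.
  - by subst; rewrite ow /=; lra.
  - by subst; rewrite oj /=; lra.
have pth1 : path (larc f1) w s.
  apply: (sub_in_path (P := predC1 j)) pth.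
    move=> y y' /= ny _ /andP[nyy /existsP[o' /andP[/eqP fo' g']]].
    rewrite /larc nyy /=; apply/existsP; exists o'; rewrite ffunE g' andbT.
    case: (eqVneq o' o) => [e|_]; last by rewrite fo'.
    by move: fo' ny; rewrite e fo => <- /=; rewrite inE eqxx.
  apply/allP => z zin /=; apply/eqP => e; subst; by rewrite zin in jn.
have [f' vf' a'] := IH f1 w vf1 pth1 u.
exists f' => // y.
have := a' y; have := a1 y; lra.
Qed.

Lemma shift {f j k} : valid f -> connect (larc f) j k -> j != k ->
  exists2 f', valid f' &
   [/\ a f' j = a f j - 1, a f' k = a f k + 1 &
       forall y, y != j -> y != k -> a f' y = a f y].
Proof.
move=> vf /simple_path[s [pth u lst]] njk.
have [f' vf' H] := shift_path vf pth u.
have nkj : k != j by rewrite eq_sym.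
exists f' => //; split.
- by have := H j; rewrite lst eqxx (negbTE njk) /=; lra.
- by have := H k; rewrite lst eqxx (negbTE nkj) /=; lra.
- move=> y nyj nyk; have := H y; rewrite lst (negbTE nyj) (negbTE nyk) /=; lra.
Qed.


Definition Phi f : R := \sum_y (a f y - h y) ^+ 2.
Definition rounded f : bool := [forall y, (a f y < h y + 1) && (h y < a f y + 1)].

Lemma sum_shift (F G : 'I_n -> R) j k : j != k ->
  (forall y, y != j -> y != k -> F y = G y) ->
  \sum_y F y = \sum_y G y + (F j - G j) + (F k - G k).
Proof.
move=> njk H.
have nkj : k != j by rewrite eq_sym.
rewrite (bigD1 j) // (bigD1 k) //= [X in _ = X + _ + _](bigD1 j) //=
        [X in _ = _ + X + _ + _](bigD1 k) //=.
have -> : \sum_(i | (i != j) && (i != k)) F i = \sum_(i | (i != j) && (i != k)) G i.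
  by apply: eq_bigr => y /andP[]; exact: H.
lra.
Qed.

Lemma Phi_shift {f f' j k} : j != k ->
  a f' j = a f j - 1 -> a f' k = a f k + 1 ->
  (forall y, y != j -> y != k -> a f' y = a f y) ->
  Phi f' = Phi f + 2 - 2 * (a f j - h j) + 2 * (a f k - h k).
Proof.
move=> njk E1 E2 E3.
rewrite /Phi (@sum_shift (fun y => (a f' y - h y) ^+ 2) (fun y => (a f y - h y) ^+ 2) j k njk); last first.
  by move=> y ny nk /=; rewrite E3.
rewrite E1 E2 /=; ring.
Qed.

Lemma exists_valid (i0 : 'I_n) : exists f, valid f.
Proof.
exists [ffun o => if [pick v | good o v] is Some v then v else i0].
apply/forallP => o; apply/implyP => /existsP[v0 ov0]; rewrite ffunE.
case: pickP => [v //|none]; exfalso.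
case: (@arg_minP _ R _ v0 (fun v => o \in L v) h ov0) => v ov Hv.
have := none v; rewrite /good ov /=; move/negP; apply.
by apply/forallP => w; apply/implyP => ow; apply: Hv.
Qed.

Lemma exists_rounded (i0 : 'I_n) : exists f, valid f && rounded f.
Proof.
have [f0 v0] := exists_valid i0.
case: (@arg_minP _ R _ f0 valid Phi v0) => f vf fmin.
exists f; rewrite vf /=.
apply/forallP => j; apply/andP; split; rewrite ltNge; apply/negP => H.
- have [k Sk ak] : exists2 k, connect (larc f) j k & a f k < h k.
    case: (boolP [exists k, connect (larc f) j k && (a f k < h k)]).
      by move=> /existsP[k /andP[]]; exists k.
    move=> /existsPn Hn; exfalso.
    have := reach_fwd j vf.
    rewrite (bigD1 j) ?connect0 //= [X in _ <= X](bigD1 j) ?connect0 //=.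
    have : \sum_(s | connect (larc f) j s && (s != j)) h s <=
           \sum_(s | connect (larc f) j s && (s != j)) a f s.
      apply: ler_sum => s /andP[Ss _]; have := Hn s; rewrite Ss /= -leNgt; done.
    lra.
  case: (eqVneq j k) => [e|njk]; first by subst; lra.
  have [f' vf' [E1 E2 E3]] := shift vf Sk njk.
  have := fmin f' vf'; rewrite (Phi_shift njk E1 E2 E3); lra.
- have [k Sk ak] : exists2 k, connect (larc f) k j & h k < a f k.
    case: (boolP [exists k, connect (larc f) k j && (h k < a f k)]).
      by move=> /existsP[k /andP[]]; exists k.
    move=> /existsPn Hn; exfalso.
    have := reach_bwd j vf.
    rewrite (bigD1 j) ?connect0 //= [X in _ <= X](bigD1 j) ?connect0 //=.
    have : \sum_(s | connect (larc f) s j && (s != j)) a f s <=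
           \sum_(s | connect (larc f) s j && (s != j)) h s.
      apply: ler_sum => s /andP[Ss _]; have := Hn s; rewrite Ss /= -leNgt; done.
    lra.
  case: (eqVneq k j) => [e|nkj]; first by subst; lra.
  have [f' vf' [E1 E2 E3]] := shift vf Sk nkj.
  have := fmin f' vf'; rewrite (Phi_shift nkj E1 E2 E3); lra.
Qed.


Lemma rounded_at {f} y : rounded f -> (a f y < h y + 1) && (h y < a f y + 1).
Proof. by move/forallP. Qed.

Lemma exists_ge i : exists f, [&& valid f, rounded f & h i <= a f i].
Proof.
have [f0 v0] := exists_rounded i.
case: (@arg_maxnP _ f0 (fun f => valid f && rounded f) (fun f => #|chi f i|) v0)
  => f /andP[vf rf] fmax.
exists f; rewrite vf rf /= leNgt; apply/negP => lt.
have [k Sk ak] : exists2 k, connect (larc f) k i & h k < a f k.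
  case: (boolP [exists k, connect (larc f) k i && (h k < a f k)]).
    by move=> /existsP[k /andP[]]; exists k.
  move=> /existsPn Hn; exfalso.
  have := reach_bwd i vf.
  rewrite (bigD1 i) ?connect0 //= [X in _ <= X](bigD1 i) ?connect0 //=.
  have : \sum_(s | connect (larc f) s i && (s != i)) a f s <=
         \sum_(s | connect (larc f) s i && (s != i)) h s.
    apply: ler_sum => s /andP[Ss _]; have := Hn s; rewrite Ss /= -leNgt; done.
  lra.
case: (eqVneq k i) => [e|nki]; first by subst; lra.
have [f' vf' [E1 E2 E3]] := shift vf Sk nki.
have rf' : rounded f'.
  apply/forallP => y.
  case: (eqVneq y k) => [->|nyk]; first by rewrite E1; have := rounded_at k rf; lra.
  case: (eqVneq y i) => [->|nyi]; first by rewrite E2; have := rounded_at i rf; lra.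
  by rewrite E3 //; exact: rounded_at.
have : a f' i <= a f i by rewrite /a ler_nat; apply: fmax; rewrite vf' rf'.
lra.
Qed.

Lemma exists_le i : exists f, [&& valid f, rounded f & a f i <= h i].
Proof.
have [f0 v0] := exists_rounded i.
case: (@arg_minnP _ f0 (fun f => valid f && rounded f) (fun f => #|chi f i|) v0)
  => f /andP[vf rf] fmin.
exists f; rewrite vf rf /= leNgt; apply/negP => lt.
have [k Sk ak] : exists2 k, connect (larc f) i k & a f k < h k.
  case: (boolP [exists k, connect (larc f) i k && (a f k < h k)]).
    by move=> /existsP[k /andP[]]; exists k.
  move=> /existsPn Hn; exfalso.
  have := reach_fwd i vf.
  rewrite (bigD1 i) ?connect0 //= [X in _ <= X](bigD1 i) ?connect0 //=.
  have : \sum_(s | connect (larc f) i s && (s != i)) h s <=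
         \sum_(s | connect (larc f) i s && (s != i)) a f s.
    apply: ler_sum => s /andP[Ss _]; have := Hn s; rewrite Ss /= -leNgt; done.
  lra.
case: (eqVneq i k) => [e|nik]; first by subst; lra.
have [f' vf' [E1 E2 E3]] := shift vf Sk nik.
have rf' : rounded f'.
  apply/forallP => y.
  case: (eqVneq y i) => [->|nyi]; first by rewrite E1; have := rounded_at i rf; lra.
  case: (eqVneq y k) => [->|nyk]; first by rewrite E2; have := rounded_at k rf; lra.
  by rewrite E3 //; exact: rounded_at.
have : a f i <= a f' i by rewrite /a ler_nat; apply: fmin; rewrite vf' rf'.
lra.
Qed.

Lemma cardE' (A : {set 'I_m}) : #|A| = (\sum_o (o \in A : nat))%N.
Proof.
rewrite -sum1_card big_mkcond /=; apply: eq_bigr => o _; by case: (o \in A).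
Qed.

Lemma arc_h {f y y'} : valid f -> Defs.arc L (chi f) y y' -> h y <= h y'.
Proof.
move=> vf /andP[_ /existsP[o /andP[]]]; rewrite inE => /andP[/eqP fo oy] oy'.
have lo : likable o by apply/existsP; exists y.
have /andP[_ /forallP H] := valid_good vf lo.
by have := H y'; rewrite oy' fo.
Qed.

Lemma path_h {f u s} : valid f -> path (Defs.arc L (chi f)) u s -> h u <= h (last u s).
Proof.
move=> vf; elim: s u => [|w s IH] u /=; first by rewrite lexx.
by move=> /andP[auw p]; apply: le_trans (arc_h vf auw) (IH _ p).
Qed.

Lemma stable_of {f} : valid f -> rounded f -> stable_indiv L (chi f).
Proof.
move=> vf rf; split.
- by move=> i; apply/subsetP => o; rewrite inE => /andP[_ ->].
- split.
    move=> i j nij; rewrite -setI_eq0; apply/eqP/setP => o; rewrite !inE.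
    case: (eqVneq (f o) i) => [e|] //=; case: (eqVneq (f o) j) => [e'|] //=;
      rewrite ?andbF //.
    by rewrite -e -e' eqxx in nij.
  move=> chi' Hd; rewrite /indiv_usw.
  under eq_bigr do rewrite cardE'.
  under [X in (_ <= X)%N]eq_bigr do rewrite cardE'.
  rewrite exchange_big [X in (_ <= X)%N]exchange_big /=.
  apply: leq_sum => o _.
  case: (boolP (likable o)) => lo; last first.
    rewrite big1 // => i _; apply/eqP; rewrite eqb0 !inE; apply/negP => /andP[_ oi].
    by move/existsPn: lo => /(_ i); rewrite oi.
  apply: (@leq_trans 1).
    case: (pickP (fun i => o \in chi' i)) => [i oi|none]; last first.
      by rewrite big1 // => j _; rewrite !inE none.
    rewrite (bigD1 i) //= big1 ?addn0 ?leq_b1 // => j nji.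
    by rewrite !inE (disjointFl (Hd j i nji) oi).
  have /andP[ofo _] := valid_good vf lo.
  by rewrite (bigD1 (f o)) //= !inE eqxx ofo.
- move=> u v [s [_ pth _ lst]] H.
  have := path_h vf pth; rewrite lst => hle.
  have := rounded_at u rf; have := rounded_at v rf.
  rewrite /a => /andP[_ r2] /andP[r1 _].
  have : (#|chi f u|)%:R < (#|chi f v| + 2)%:R :> R by rewrite natrD; lra.
  by rewrite ltr_nat ltnNge H.
Qed.

Lemma main_part :
  (forall (d : nat) (i : 'I_n), in_layer L d i -> profile x i = d%:R) /\
  (forall (d : nat) (i : 'I_n), (1 <= d)%N -> in_layer_minus L d i ->
     (d.-1)%:R <= profile x i <= d%:R).
Proof.
split.
- move=> d i Hl.
  have [f1 /and3P[v1 r1 g1]] := exists_ge i.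
  have [f2 /and3P[v2 r2 g2]] := exists_le i.
  have e1 := Hl _ (stable_of v1 r1); have e2 := Hl _ (stable_of v2 r2).
  rewrite /a e1 in g1; rewrite /a e2 in g2.
  by apply/eqP; rewrite eq_le g1 g2.
- move=> d i d1 [Hall _ _].
  have [f1 /and3P[v1 r1 g1]] := exists_ge i.
  have [f2 /and3P[v2 r2 g2]] := exists_le i.
  have ub : forall c : nat, c = d.-1 \/ c = d -> (c%:R : R) <= d%:R.
    by move=> c [->|->]; rewrite ler_nat // leq_pred.
  have lb : forall c : nat, c = d.-1 \/ c = d -> ((d.-1)%:R : R) <= c%:R.
    by move=> c [->|->]; rewrite ler_nat // leq_pred.
  have := ub _ (Hall _ (stable_of v1 r1)); have := lb _ (Hall _ (stable_of v2 r2)).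
  rewrite /a in g1 g2.
  move=> H2 H1; apply/andP; split; [exact: le_trans H2 g2 | exact: le_trans g1 H1].
Qed.

End Proofs.

Theorem lemma7 (R : realFieldType) (n m : nat) (L : 'I_n -> {set 'I_m})
    (x : 'I_m -> 'I_n -> R) :
  stable_frac L x ->
  (forall (d : nat) (i : 'I_n), in_layer L d i -> profile x i = d%:R) /\
  (forall (d : nat) (i : 'I_n), (1 <= d)%N -> in_layer_minus L d i ->
     (d.-1)%:R <= profile x i <= d%:R).
Proof. move=> Hx; exact: main_part. Qed.
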